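(* Let $m\ge1$ and let $C_k$ be the $\mathbb Z_2$-vector space with basis the $k$-element subsets of $\{1,\dots,2m\}$. Define $\partial_k\colon C_k\to C_{k-2}$ on basis elements by $\partial_k(\Delta)=\sum\Gamma$, the sum over all $(k-2)$-element subsets $\Gamma\subset\Delta$. Then $$\dim_{\mathbb Z_2}\ker\partial_{m+1}=\binom{2m}{m-1}-\sum_{i=0}^{m-1}2^{m-1-i}\binom{2i}{i}.$$
   Context: $\mathbb Z_2=\mathbb Z/2\mathbb Z$; $C_k=0$ for $k<0$. *)

(* Defs.v *)
From HB Require Import structures.
From mathcomp Require Import all_boot all_order all_algebra.
Set Implicit Arguments. Unset Strict Implicit. Unset Printing Implicit Defensive.
Import GRing.Theory.

(* k-element subsets of the ground set 'I_n (= {0,...,n-1}, standing for {1,...,n}). *)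
Definition ksub (n k : nat) : {set {set 'I_n}} := [set A : {set 'I_n} | #|A| == k].

(* C_k = Z_2-vector space with basis the k-subsets: row vectors 'rV['F_2]_#|ksub n k|,
   coordinate i corresponds to the basis subset enum_val i.
   The boundary d_k : C_k -> C_(k-2) acts on row vectors by u |-> u *m bdry n k;
   row Delta of the matrix is d_k(Delta) = sum of the (k-2)-subsets Gamma of Delta.
   (Only used for k >= 2, where k - 2 is the genuine difference.) *)
Definition bdry (n k : nat) : 'M['F_2]_(#|ksub n k|, #|ksub n (k - 2)|) :=
  \matrix_(i < #|ksub n k|, j < #|ksub n (k - 2)|)
    ((enum_val j \subset enum_val i)%:R)%R.

(* Main.v *)
Require Import Defs.
From HB Require Import structures.
From mathcomp Require Import all_boot all_order all_algebra.
From mathcomp Require Import zify mxabelem.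

Module Aux.
Set Implicit Arguments. Unset Strict Implicit. Unset Printing Implicit Defensive.
Import GRing.Theory.
Module A1.
Local Open Scope ring_scope.

Lemma F2add (x : 'F_2) : x + x = 0.
Proof. by case: x => -[|[|//]] Hx; apply/val_inj. Qed.
Lemma F2cases (x : 'F_2) : x = 0 \/ x = 1.
Proof. by case: x => -[|[|//]] Hx; [left|right]; apply/val_inj. Qed.

 Lemma addcE (aT : finType) (R : zmodType) (f g : {ffun aT -> R}) x : (f + g) x = f x + g x.
Proof. by rewrite ffunE. Qed.
Lemma zerocE (aT : finType) (R : zmodType) x : (0 : {ffun aT -> R}) x = 0.
Proof. by rewrite ffunE. Qed.

Ltac F2solve := let B0 := fresh "B0" in apply/ffunP => B0; rewrite ?addcE ?zerocE;
  repeat (match goal with |- context [?F B0] =>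
    case: (F2cases (F B0)) => -> end);
  by apply/val_inj.

Section Chains.
Variable T : finType.
Definition chain := {ffun {set T} -> 'F_2}.
Implicit Types (f g : chain) (A B C U : {set T}).

Definition D (j : nat) f : chain :=
  [ffun B : {set T} => \sum_(A : {set T} | (B \subset A) && (#|A| == #|B| + j)%N) f A].
Definition mx (a : T) f : chain := [ffun B : {set T} => if a \in B then f (B :\ a) else 0].

Lemma chain2 f : f + f = 0.
Proof. by apply/ffunP => B; rewrite !ffunE F2add. Qed.

Lemma D_add j f g : D j (f + g) = D j f + D j g.
Proof. by apply/ffunP => B; rewrite !ffunE -big_split; apply: eq_bigr => A _; rewrite ffunE. Qed.

Lemma D_0 j : D j 0 = 0.
Proof. by apply/ffunP => B; rewrite !ffunE big1 // => A _; rewrite ffunE. Qed.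

Lemma mx_add a f g : mx a (f + g) = mx a f + mx a g.
Proof. by apply/ffunP => B; rewrite !ffunE; case: ifP; rewrite ?ffunE ?addr0. Qed.

Lemma mx_0 a : mx a 0 = 0.
Proof. by apply/ffunP => B; rewrite !ffunE; case: ifP; rewrite ?ffunE. Qed.

Lemma D0 f : D 0 f = f.
Proof.
apply/ffunP => B; rewrite ffunE (big_pred1 B) // => A /=.
rewrite addn0; apply/andP/eqP => [[sBA /eqP cAB]|->]; last by [].
by apply/esym/eqP; rewrite eqEcard sBA cAB leqnn.
Qed.

Lemma shift_sum a (H : {set T} -> 'F_2) : (forall A, a \in A -> H A = 0) ->
  \sum_(A : {set T}) H A = \sum_(A : {set T}) (if a \in A then H (A :\ a) else 0).
Proof.
move=> H0.
pose t A := if a \in A then A :\ a else a |: A.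
have tK : involutive t.
  move=> A; rewrite /t; case: (boolP (a \in A)) => aA.
    by rewrite setD11 setD1K.
  by rewrite setU11 setU1K.
rewrite (reindex_inj (inv_inj tK)); apply: eq_bigr => A _.
rewrite /t; case: ifP => // aA; by rewrite H0 // setU11.
Qed.

Lemma cardsDsub A B : B \subset A -> #|A :\: B| = (#|A| - #|B|)%N.
Proof. by move=> sBA; rewrite cardsD (setIidPr sBA). Qed.

Lemma setDUK B A : B \subset A -> (A :\: B) :|: B = A.
Proof.
move=> sBA; apply/setP => x; rewrite !inE; case: (boolP (x \in B)) => xB /=.
  by rewrite (subsetP sBA) ?orbT.
by rewrite ?orbF ?andbT.
Qed.

Lemma count_interval B C i : B \subset C ->
  #|[set A : {set T} | (B \subset A) && (A \subset C) && (#|A| == #|B| + i)%N]| = 'C(#|C| - #|B|, i).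
Proof.
move=> sBC.
set S := [set A : {set T} | _].
have inj : {in S &, injective (fun A => A :\: B)}.
  move=> A1 A2; rewrite !inE => /andP[/andP[s1 _] _] /andP[/andP[s2 _] _] e.
  by rewrite -(setDUK s1) -(setDUK s2) e.
rewrite -(card_in_imset inj) -(cardsDsub sBC) -cards_draws.
apply: eq_card => A'; rewrite inE; apply/imsetP/andP.
  case=> A; rewrite inE => /andP[/andP[sBA sAC] /eqP cA] ->; split.
    by apply: setSD.
  by rewrite cardsDsub // cA addKn.
case=> sA' /eqP cA'; exists (A' :|: B); last first.
  rewrite setDUl setDv setU0; apply/esym/setDidPl.
  by rewrite disjoints_subset (subset_trans sA' (subsetDr C B)).
rewrite inE subsetUr /= subUset (subset_trans sA' (subsetDl _ _)) sBC /=.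
rewrite cardsU (_ : A' :&: B = set0) ?cards0 ?subn0 ?cA' 1?addnC //.
by apply: disjoint_setI0; rewrite disjoints_subset (subset_trans sA' (subsetDr C B)).
Qed.

Lemma DD i j f : D i (D j f) = [ffun B => ('C(i + j, i))%:R * D (i + j) f B].
Proof.
apply/ffunP => B; rewrite !ffunE.
pose P A := (B \subset A) && (#|A| == #|B| + i)%N.
pose Q A C := (A \subset C) && (#|C| == #|A| + j)%N.
transitivity (\sum_(A : {set T}) \sum_(C : {set T}) (if P A && Q A C then f C else 0)).
  rewrite big_mkcond; apply: eq_bigr => A _; rewrite ffunE.
  rewrite -/(P A); case: (P A) => /=; last by rewrite big1.
  by rewrite big_mkcond.
rewrite exchange_big mulr_sumr [RHS]big_mkcond /=; apply: eq_bigr => C _.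
rewrite -big_mkcond sumr_const.
have [RC|nRC] := boolP ((B \subset C) && (#|C| == #|B| + (i + j))%N).
  move/andP: RC => [sBC /eqP cC].
  rewrite mulr_natl; congr (_ *+ _).
  rewrite -[in RHS](_ : (#|C| - #|B| = i + j)%N); last by rewrite cC addKn.
  rewrite -count_interval //; apply: eq_card => A; rewrite inE /P /Q.
  apply/andP/andP => [[/andP[sBA /eqP cA] /andP[sAC _]]|[/andP[sBA sAC] /eqP cA]].
    by rewrite sBA sAC cA.
  by rewrite sBA sAC cA /= eqxx cC addnA.
rewrite (_ : #|_| = 0%N) ?mulr0n //.
apply: eq_card0 => A; rewrite /P /Q; apply/negP => /andP[/andP[sBA /eqP cA] /andP[sAC /eqP cC]].
by move: nRC; rewrite (subset_trans sBA sAC) cC cA addnA eqxx.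
Qed.

Lemma D11 f : D 1 (D 1 f) = 0.
Proof.
rewrite DD; apply/ffunP => B; rewrite !ffunE.
by rewrite (_ : 'C(1 + 1, 1)%:R = 0 :> 'F_2) ?mul0r //; apply/val_inj.
Qed.

Lemma D22 f : D 2 (D 2 f) = 0.
Proof.
rewrite DD; apply/ffunP => B; rewrite !ffunE.
by rewrite (_ : 'C(2 + 2, 2)%:R = 0 :> 'F_2) ?mul0r //; apply/val_inj.
Qed.

Lemma D21 f : D 2 (D 1 f) = D 1 (D 2 f).
Proof. by rewrite !DD. Qed.

Definition avoid a f := forall A, a \in A -> f A = 0.

Lemma subD1D1 a A B : a \in A -> a \in B -> (B :\ a \subset A :\ a) = (B \subset A).
Proof.
move=> aA aB; apply/idP/idP => [s|s]; last by apply: setSD.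
by rewrite -(setD1K aA) -(setD1K aB) setUS.
Qed.

Lemma D_mx j a g : avoid a g -> D j.+1 (mx a g) = mx a (D j.+1 g) + D j g.
Proof.
move=> ag; apply/ffunP => B; rewrite !ffunE.
have sh : forall (P : pred {set T}),
    \sum_(A | P A) g A = \sum_(A : {set T}) (if a \in A then (if P (A :\ a) then g (A :\ a) else 0) else 0).
  move=> P; rewrite big_mkcond; apply: shift_sum => A aA.
  by rewrite ag //; case: (P A).
rewrite big_mkcond; case: (boolP (a \in B)) => aB.
  rewrite [X in _ = _ + X]big1 ?addr0; last first.
    by move=> A /andP[sBA _]; apply: ag; apply: (subsetP sBA).
  rewrite sh; apply: eq_bigr => A _ /=.
  rewrite ffunE; case: (boolP (a \in A)) => aA; last first.
    by case: ifP => // /andP[sBA _]; case/negP: aA; apply: (subsetP sBA).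
  rewrite subD1D1 // [#|A|](cardsD1 a) [#|B|](cardsD1 a) aA aB !add1n addSn eqSS addnS.
  by case: ifP.
rewrite add0r sh; apply: eq_bigr => A _ /=.
rewrite ffunE; case: (boolP (a \in A)) => aA; last by case: ifP.
rewrite subsetD1 aB andbT [#|A|](cardsD1 a) aA add1n addnS eqSS.
by case: ifP.
Qed.



Lemma avoid_D a j g : avoid a g -> avoid a (D j g).
Proof.
move=> ag B aB; rewrite ffunE big1 // => A /andP[sBA _]; apply: ag.
exact: (subsetP sBA).
Qed.

Lemma avoid_mx a b g : a != b -> avoid a g -> avoid a (mx b g).
Proof.
move=> ab ag B aB; rewrite ffunE; case: ifP => // _; apply: ag.
by rewrite !inE ab aB.
Qed.

Lemma avoid_add a f g : avoid a f -> avoid a g -> avoid a (f + g).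
Proof. by move=> af ag B aB; rewrite ffunE af ?ag ?addr0. Qed.

Lemma expand a b e0 e1 e2 e3 : a != b ->
  avoid a e0 -> avoid b e0 -> avoid a e1 -> avoid b e1 ->
  avoid a e2 -> avoid b e2 -> avoid a e3 -> avoid b e3 ->
  D 2 (e0 + mx a e1 + mx b e2 + mx a (mx b e3)) =
  (D 2 e0 + D 1 e1 + D 1 e2 + e3) + mx a (D 2 e1 + D 1 e3) + mx b (D 2 e2 + D 1 e3)
   + mx a (mx b (D 2 e3)).
Proof.
move=> ab a0 b0 a1 b1 a2 b2 a3 b3.
have amb : avoid a (mx b e3) by apply: avoid_mx.
rewrite !D_add (D_mx 1 a1) (D_mx 1 b2) (D_mx 1 amb) (D_mx 1 b3) (D_mx 0 b3) D0.
rewrite !mx_add.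
F2solve.
Qed.

Definition supp U k f := [forall A, (f A != 0) ==> (A \subset U) && (#|A| == k)].

Lemma suppP U k f : reflect (forall A, f A != 0 -> (A \subset U) && (#|A| == k)) (supp U k f).
Proof.
apply: (iffP forallP) => H A; first by move=> nz; exact: (implyP (H A)).
by apply/implyP; exact: H.
Qed.

Definition Sset U k := [set f : chain | supp U k f].
Definition Kset U k := [set f : chain | supp U k f & D 2 f == 0].

Lemma card_Sset U k : #|Sset U k| = (2 ^ 'C(#|U|, k))%N.
Proof.
pose Q := [set A : {set T} | A \subset U & #|A| == k].
transitivity #|pffun_on (0 : 'F_2) Q predT|.
  apply: eq_card => f; rewrite inE; apply/suppP/pffun_onP.
    move=> H; split; last by move=> x.
    by apply/subsetP => A; rewrite supportE inE; exact: H.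
  case=> sub _ A nz; have := subsetP sub A; rewrite supportE inE; exact.
rewrite card_pffun_on cards_draws; congr (_ ^ _)%N.
by rewrite cardT -cardE card_Fp.
Qed.

Lemma supp_D U k j f : supp U (j + k) f -> supp U k (D j f).
Proof.
move/suppP=> H; apply/suppP => B; apply: contraR => nB.
rewrite ffunE big1 // => A /andP[sBA /eqP cA]; apply/eqP; apply: contraR nB => fA.
case/andP: (H A fA) => sAU /eqP cA'.
rewrite (subset_trans sBA sAU) /=; apply/eqP; lia.
Qed.

Lemma supp_add U k f g : supp U k f -> supp U k g -> supp U k (f + g).
Proof.
move=> /suppP Hf /suppP Hg; apply/suppP => A; rewrite ffunE.
case: (boolP (f A != 0)) => [/Hf //|]; rewrite negbK => /eqP ->; rewrite add0r; exact: Hg.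
Qed.

Lemma supp_sub U1 U2 k f : U1 \subset U2 -> supp U1 k f -> supp U2 k f.
Proof.
move=> s /suppP H; apply/suppP => A /H /andP[sA ->]; by rewrite (subset_trans sA s).
Qed.

Lemma supp_mx a U k g : a \in U -> supp (U :\ a) k g -> supp U k.+1 (mx a g).
Proof.
move=> aU /suppP H; apply/suppP => B; rewrite ffunE; case: ifP => aB; last by rewrite eqxx.
move/H => /andP[sB /eqP cB].
rewrite -(setD1K aB) -(setD1K aU) setUS //= cardsU1 !inE eqxx /= cB.
by rewrite add1n.
Qed.

Lemma supp_avoid a U k g : a \notin U -> supp U k g -> avoid a g.
Proof.
move=> aU /suppP H A aA; apply/eqP; apply: contraR aU => /H /andP[sAU _].
exact: (subsetP sAU).
Qed.

End Chains.

End A1.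
Export A1.
Module A2.
Local Open Scope ring_scope.

Ltac avt := repeat first [assumption | apply: avoid_add | apply: avoid_D].

Section Bij.
Variable T : finType.
Variables (a b : T) (U : {set T}) (k : nat).
Hypotheses (aU : a \in U) (bU : b \in U) (ab : a != b).
Implicit Types (f g c : chain T).

Let U' := U :\ a :\ b.
Lemma aU' : a \notin U'. Proof. by rewrite !inE eqxx andbF. Qed.
Lemma bU' : b \notin U'. Proof. by rewrite !inE eqxx. Qed.
Lemma bUa : b \in U :\ a. Proof. by rewrite !inE eq_sym ab. Qed.
Lemma U'sub : U' \subset U :\ a. Proof. exact: subsetDl. Qed.

Definition proj c : chain T := [ffun A : {set T} => if (a \notin A) && (b \notin A) then c A else 0].
Definition p1 c : chain T := [ffun A : {set T} => if (a \notin A) && (b \notin A) then c (a |: A) else 0].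
Definition p2 c : chain T := [ffun A : {set T} => if (a \notin A) && (b \notin A) then c (b |: A) else 0].
Definition p3 c : chain T := [ffun A : {set T} => if (a \notin A) && (b \notin A) then c (a |: (b |: A)) else 0].

Definition recon e0 e1 e2 e3 : chain T := e0 + mx a e1 + mx b e2 + mx a (mx b e3).

Lemma ba : (b == a) = false. Proof. by apply/negbTE; rewrite eq_sym. Qed.

Lemma recon_decomp c : c = recon (proj c) (p1 c) (p2 c) (p3 c).
Proof.
apply/ffunP => A; rewrite /recon !ffunE !in_setD1 !eqxx ba (negbTE ab) /=.
case: (boolP (a \in A)) => aA; case: (boolP (b \in A)) => bA /=.
- have bAa : b \in A :\ a by rewrite in_setD1 ba bA.
  by rewrite !add0r (setD1K bAa) (setD1K aA).
- by rewrite ?add0r ?addr0 (setD1K aA).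
- by rewrite ?add0r ?addr0 (setD1K bA).
- by rewrite ?add0r ?addr0.
Qed.

Section Extract.
Variables e0 e1 e2 e3 : chain T.
Hypotheses (a0 : avoid a e0) (b0 : avoid b e0) (a1 : avoid a e1) (b1 : avoid b e1)
  (a2 : avoid a e2) (b2 : avoid b e2) (a3 : avoid a e3) (b3 : avoid b e3).

Lemma ex0 : proj (recon e0 e1 e2 e3) = e0.
Proof.
apply/ffunP => A; rewrite /recon !ffunE.
case: (boolP (a \in A)) => aA; case: (boolP (b \in A)) => bA /=.
- by rewrite a0.
- by rewrite a0.
- by rewrite b0.
- by rewrite !addr0.
Qed.

Lemma ex1 : p1 (recon e0 e1 e2 e3) = e1.
Proof.
apply/ffunP => A; rewrite /recon !ffunE !in_setU1 eqxx ba /=.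
case: (boolP (a \in A)) => aA; case: (boolP (b \in A)) => bA /=.
- by rewrite a1.
- by rewrite a1.
- by rewrite b1.
- by rewrite a0 ?setU11 // (setU1K aA) add0r (negbTE bA) !addr0.
Qed.

Lemma ex2 : p2 (recon e0 e1 e2 e3) = e2.
Proof.
apply/ffunP => A; rewrite /recon !ffunE !in_setU1 eqxx (negbTE ab) /=.
case: (boolP (a \in A)) => aA; case: (boolP (b \in A)) => bA /=.
- by rewrite a2.
- by rewrite a2.
- by rewrite b2.
- by rewrite b0 ?setU11 // (setU1K bA) add0r add0r addr0.
Qed.

Lemma ex3 : p3 (recon e0 e1 e2 e3) = e3.
Proof.
apply/ffunP => A; rewrite /recon !ffunE !in_setU1 !eqxx /=.
case: (boolP (a \in A)) => aA; case: (boolP (b \in A)) => bA /=.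
- by rewrite a3.
- by rewrite a3.
- by rewrite b3.
- have abA : a \notin b |: A by rewrite in_setU1 (negbTE ab) aA.
  rewrite a0 ?setU11 // (setU1K abA) b1 ?setU11 // add0r add0r.
  rewrite orbT a2; last by rewrite in_setD1 ab in_setU1 eqxx.
  by rewrite add0r (setU1K bA).
Qed.
End Extract.

Lemma subU' (A : {set T}) : (A \subset U') = [&& A \subset U, a \notin A & b \notin A].
Proof. by rewrite /U' !subsetD1 andbA. Qed.

Lemma supp_proj j c : supp U j c -> supp U' j (proj c).
Proof.
move/suppP=> H; apply/suppP => A; rewrite ffunE.
case: ifP => [/andP[aA bA] /H /andP[sA ->]|]; last by rewrite eqxx.
by rewrite subU' sA aA bA.
Qed.

Lemma supp_p1 j c : supp U j.+1 c -> supp U' j (p1 c).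
Proof.
move/suppP=> H; apply/suppP => A; rewrite ffunE.
case: ifP => [/andP[aA bA] /H /andP[sA /eqP cA]|]; last by rewrite eqxx.
rewrite subU' (subset_trans (subsetUr _ _) sA) aA bA /=.
by move: cA; rewrite cardsU1 aA add1n => -[->].
Qed.

Lemma supp_p2 j c : supp U j.+1 c -> supp U' j (p2 c).
Proof.
move/suppP=> H; apply/suppP => A; rewrite ffunE.
case: ifP => [/andP[aA bA] /H /andP[sA /eqP cA]|]; last by rewrite eqxx.
rewrite subU' (subset_trans (subsetUr _ _) sA) aA bA /=.
by move: cA; rewrite cardsU1 bA add1n => -[->].
Qed.

Lemma supp_p3 j c : supp U j.+2 c -> supp U' j (p3 c).
Proof.
move/suppP=> H; apply/suppP => A; rewrite ffunE.
case: ifP => [/andP[aA bA] /H /andP[sA /eqP cA]|]; last by rewrite eqxx.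
rewrite subU' (subset_trans (subset_trans (subsetUr [set b] A) (subsetUr [set a] _)) sA) aA bA /=.
have abA : a \notin b |: A by rewrite in_setU1 (negbTE ab) aA.
by move: cA; rewrite cardsU1 abA cardsU1 bA !add1n => -[->].
Qed.

Lemma supp_recon j e0 e1 e2 e3 : supp U' j.+2 e0 -> supp U' j.+1 e1 -> supp U' j.+1 e2 ->
  supp U' j e3 -> supp U j.+2 (recon e0 e1 e2 e3).
Proof.
move=> s0 s1 s2 s3.
have sUa : U' \subset U :\ a by exact: subsetDl.
have sU : U' \subset U by apply: subset_trans sUa (subsetDl _ _).
rewrite /recon; apply: supp_add; [apply: supp_add; [apply: supp_add|]|].
- exact: supp_sub s0.
- by apply: supp_mx aU _; apply: supp_sub s1.
- by apply: supp_mx bU _; apply: supp_sub s2; apply/subsetP => x; rewrite !in_setD1 => /andP[-> /andP[_ ->]].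
- by apply: supp_mx aU _; apply: supp_mx bUa _; exact: s3.
Qed.

Definition Phi (x : chain T * chain T * chain T) : chain T :=
  recon x.1.1 (x.1.2 + D 1 x.1.1) (x.2 + D 1 x.1.1) (D 2 x.1.1 + D 1 (x.1.2 + x.2)).
Definition Psi c := (proj c, p1 c + D 1 (proj c), p2 c + D 1 (proj c)).

Definition Dom := setX (setX (Sset U' k.+2) (Kset U' k.+1)) (Kset U' k.+1).

Lemma avA j g : supp U' j g -> avoid a g.
Proof. exact: supp_avoid aU'. Qed.
Lemma avB j g : supp U' j g -> avoid b g.
Proof. exact: supp_avoid bU'. Qed.

Lemma Dom_inv x : x \in Dom -> Phi x \in Kset U k.+2 /\ Psi (Phi x) = x.
Proof.
case: x => [[c0 y1] y2]; rewrite !inE /= => /andP[/andP[s0 /andP[s1 /eqP k1]] /andP[s2 /eqP k2]].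
have d0 : supp U' k.+1 (D 1 c0) by apply: supp_D.
have e1s : supp U' k.+1 (y1 + D 1 c0) by apply: supp_add.
have e2s : supp U' k.+1 (y2 + D 1 c0) by apply: supp_add.
have e3s : supp U' k (D 2 c0 + D 1 (y1 + y2)).
  by apply: supp_add; apply: supp_D => //; apply: supp_add.
split; last first.
  rewrite /Psi /Phi /= ex0 ?ex1 ?ex2; try by [apply: avA; eassumption|apply: avB; eassumption].
  by congr (_, _, _); F2solve.
rewrite /Phi /= supp_recon //=.
rewrite /recon expand //; try by [apply: avA; eassumption|apply: avB; eassumption].
have -> : D 2 c0 + D 1 (y1 + D 1 c0) + D 1 (y2 + D 1 c0) + (D 2 c0 + D 1 (y1 + y2)) = 0.
  rewrite !D_add !D11; F2solve.
have -> : D 2 (y1 + D 1 c0) + D 1 (D 2 c0 + D 1 (y1 + y2)) = 0.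
  rewrite !D_add k1 D21 !D11; F2solve.
have -> : D 2 (y2 + D 1 c0) + D 1 (D 2 c0 + D 1 (y1 + y2)) = 0.
  rewrite !D_add k2 D21 !D11; F2solve.
have -> : D 2 (D 2 c0 + D 1 (y1 + y2)) = 0.
  rewrite !D_add D22 !D21 k1 k2 !D_0; F2solve.
by rewrite !mx_0 !addr0.
Qed.

Lemma proj0 : proj 0 = 0. Proof. by apply/ffunP => A; rewrite !ffunE; case: ifP. Qed.
Lemma p10 : p1 0 = 0. Proof. by apply/ffunP => A; rewrite !ffunE; case: ifP. Qed.
Lemma p20 : p2 0 = 0. Proof. by apply/ffunP => A; rewrite !ffunE; case: ifP. Qed.

Lemma Kset_inv c : c \in Kset U k.+2 -> Psi c \in Dom /\ Phi (Psi c) = c.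
Proof.
rewrite inE => /andP[sc /eqP kc].
have dec := recon_decomp c.
set c0 := proj c in dec *; set e1 := p1 c in dec *; set e2 := p2 c in dec *; set e3 := p3 c in dec *.
have s0 : supp U' k.+2 c0 by apply: supp_proj.
have s1 : supp U' k.+1 e1 by apply: supp_p1.
have s2 : supp U' k.+1 e2 by apply: supp_p2.
have s3 : supp U' k e3 by apply: supp_p3.
have E : D 2 (recon c0 e1 e2 e3) = 0 by rewrite -dec.
have av : forall j g, supp U' j g -> avoid a g /\ avoid b g.
  by move=> j g sg; split; [apply: avA sg|apply: avB sg].
have [a0 b0] := av _ _ s0; have [a1 b1] := av _ _ s1; have [a2 b2] := av _ _ s2;
  have [a3 b3] := av _ _ s3.
rewrite /recon expand // -/(recon _ _ _ _) in E.
have h0 : D 2 c0 + D 1 e1 + D 1 e2 + e3 = 0.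
  by rewrite -proj0 -E ex0 //; avt.
have ha : D 2 e1 + D 1 e3 = 0.
  by rewrite -p10 -E ex1 //; avt.
have e3eq : e3 = D 2 c0 + D 1 e1 + D 1 e2.
  by rewrite -[LHS]addr0 -h0; F2solve.
split.
  rewrite /Psi !inE /= s0 /= supp_add //=; last by apply: supp_D.
  rewrite supp_add //=; last by apply: supp_D.
  apply/andP; split; apply/eqP.
    have Ha : D 2 e1 = D 1 e3 by rewrite -[LHS]addr0 -ha; F2solve.
    by rewrite D_add Ha e3eq !D_add !D11 D21; F2solve.
  have hb : D 2 e2 + D 1 e3 = 0 by rewrite -p20 -E ex2 //; avt.
  have Hb : D 2 e2 = D 1 e3 by rewrite -[LHS]addr0 -hb; F2solve.
  by rewrite D_add Hb e3eq !D_add !D11 D21; F2solve.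
rewrite [RHS]dec /Phi /Psi /=; congr recon; try F2solve.
by rewrite e3eq !D_add !D11; F2solve.
Qed.

Lemma card_step : #|Kset U k.+2| = (#|Sset U' k.+2| * #|Kset U' k.+1| * #|Kset U' k.+1|)%N.
Proof.
have inj : {in Dom &, injective Phi}.
  by move=> x y /Dom_inv[_ hx] /Dom_inv[_ hy] e; rewrite -hx -hy e.
have -> : Kset U k.+2 = Phi @: Dom.
  apply/setP => c; apply/idP/imsetP => [cK|[x xD ->]]; last by case: (Dom_inv xD).
  by have [PD PP] := Kset_inv cK; exists (Psi c).
by rewrite (card_in_imset inj) /Dom !cardsX.
Qed.

End Bij.

End A2.
Export A2.
Module A3.

Fixpoint kap j := if j is j'.+1 then ('C(2 * j', j'.+2) + 2 * kap j')%N else 0%N.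

Definition Ssum m := (\sum_(i < m) 2 ^ (m.-1 - i) * 'C(2 * i, i))%N.

Lemma Ssum_rec m : Ssum m.+1 = (2 * Ssum m + 'C(2 * m, m))%N.
Proof.
rewrite /Ssum big_ord_recr /= subnn expn0 mul1n; congr (_ + _)%N.
rewrite big_distrr /=; apply: eq_bigr => i _.
rewrite mulnA -expnS; congr (2 ^ _ * _)%N.
case: m i => [[]//|m] i /=; have := ltn_ord i; lia.
Qed.

Lemma kapS m : (kap m.+1 + Ssum m.+1)%N = 'C(2 * m.+1, m).
Proof.
elim: m => [|n IH]; first by rewrite /Ssum big_ord1.
rewrite /= Ssum_rec -/(kap n.+1).
have -> : ('C(2 * n.+1, n.+3) + 2 * kap n.+1 + (2 * Ssum n.+1 + 'C(2 * n.+1, n.+1)) =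
   'C(2 * n.+1, n.+3) + 2 * (kap n.+1 + Ssum n.+1) + 'C(2 * n.+1, n.+1))%N by lia.
rewrite IH.
case: n {IH} => [|p]; first by [].
have e1 : (2 * p.+3 = (2 * p.+2).+2)%N by lia.
rewrite e1 binS binS.
have e2 : (2 * p.+2 = (2 * p.+2).-1.+1)%N by lia.
rewrite [X in _ = _ + X]binS.
have -> : 'C(2 * p.+2, p.+4) = 'C(2 * p.+2, p).
  rewrite -bin_sub; last by lia.
  congr 'C(_, _); lia.
lia.
Qed.

Lemma Kset0 (T : finType) (U : {set T}) : U = set0 -> #|Kset U 1| = 1%N.
Proof.
move=> ->; transitivity #|[set (0%R : chain T)]|; last by rewrite cards1.
apply: eq_card => f; rewrite !inE.
apply/andP/eqP => [[/suppP H _]|->].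
  apply/ffunP => A; rewrite ffunE; apply/eqP; apply: contraT => /H /andP[sA /eqP cA].
  by move: cA; rewrite (_ : A = set0) ?cards0 //; apply/eqP; rewrite -subset0.
split; last by rewrite D_0.
by apply/suppP => A; rewrite ffunE eqxx.
Qed.

Lemma Kcard (T : finType) j (U : {set T}) : #|U| = (2 * j)%N -> #|Kset U j.+1| = (2 ^ kap j)%N.
Proof.
elim: j U => [|j IH] U cU.
  by rewrite Kset0 //; apply/eqP; rewrite -cards_eq0 cU.
have [a aU] : exists a, a \in U.
  by apply/set0Pn; rewrite -card_gt0 cU.
have [b bUa] : exists b, b \in U :\ a.
  by apply/set0Pn; rewrite -card_gt0; rewrite (cardsD1 a U) aU in cU; lia.
have bU : b \in U by move: bUa; rewrite in_setD1 => /andP[].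
have ab : a != b by move: bUa; rewrite in_setD1 eq_sym => /andP[].
rewrite (card_step j aU bU ab) card_Sset IH.
  have cU' : #|U :\ a :\ b| = (2 * j)%N.
    by move: cU; rewrite (cardsD1 a U) aU (cardsD1 b (U :\ a)) bUa; lia.
  by rewrite cU' /= -!expnD; congr (2 ^ _)%N; lia.
by move: cU; rewrite (cardsD1 a U) aU (cardsD1 b (U :\ a)) bUa; lia.
Qed.

End A3.
Export A3.
Module A4.
Local Open Scope ring_scope.

Section Bridge.
Variables n k : nat.
Local Notation K := k.+2.
Local Notation N := #|ksub n K|.
Local Notation M := (bdry n K).

Definition phi (u : 'rV['F_2]_N) : chain 'I_n :=
  [ffun A : {set 'I_n} => \sum_(i : 'I_N | enum_val i == A) u 0 i].

Lemma ksubE (A : {set 'I_n}) j : (A \in ksub n j) = (#|A| == j).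
Proof. by rewrite inE. Qed.

Lemma phi_ev u i : phi u (enum_val i) = u 0 i.
Proof. by rewrite ffunE (big_pred1 i) // => i'; rewrite (inj_eq enum_val_inj). Qed.

Lemma phi_inj : injective phi.
Proof.
move=> u v e; apply/rowP => i; by rewrite -!phi_ev e.
Qed.

Lemma phi_supp u : supp [set: 'I_n] K (phi u).
Proof.
apply/suppP => A; rewrite subsetT /=; apply: contraR => cA.
rewrite ffunE big_pred0 // => i; apply/negP => /eqP ei.
by move: (enum_valP i); rewrite ei ksubE (negbTE cA).
Qed.

Lemma Dphi u B : D 2 (phi u) B =
  \sum_(i : 'I_N | (B \subset enum_val i) && (#|enum_val i| == #|B| + 2)%N) u 0 i.
Proof.
rewrite ffunE (partition_big (@enum_val _ (mem (ksub n K))) (fun A => (B \subset A) && (#|A| == #|B| + 2)%N)) //=.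
apply: eq_bigr => A QA; rewrite ffunE; apply: eq_bigl => i.
by case: (boolP (enum_val i == A)) => [/eqP ->|_]; rewrite ?QA ?andbF ?eqxx.
Qed.

Lemma mulM (u : 'rV['F_2]_N) (j : 'I_#|ksub n (K - 2)|) : (u *m M) 0 j = \sum_(i : 'I_N | enum_val j \subset enum_val i) u 0 i.
Proof.
rewrite mxE [RHS]big_mkcond /=; apply: eq_bigr => i _; rewrite mxE.
by case: ifP => _; rewrite ?mulr1 ?mulr0.
Qed.

Lemma phi_ker (u : 'rV['F_2]_N) : (D 2 (phi u) == 0) = (u *m M == 0).
Proof.
apply/eqP/eqP => [H|H].
  apply/rowP => j; rewrite mulM [RHS]mxE.
  have := congr1 (fun f : chain 'I_n => f (enum_val j)) H; rewrite Dphi zerocE => e; apply: etrans e; apply: esym.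
  apply: eq_bigl => i; have := enum_valP i; have := enum_valP j; rewrite !ksubE => /eqP -> /eqP ->.
  by rewrite subnK // eqxx andbT.
apply/ffunP => B; rewrite Dphi zerocE.
case: (boolP (B \in ksub n (K - 2))) => Bin.
  have := congr1 (fun v : 'rV_ _ => v 0 (enum_rank_in Bin B)) H.
  rewrite [RHS]mxE mulM (enum_rankK_in Bin Bin) => e; apply: etrans e; apply: esym.
  apply: eq_bigl => i; have := enum_valP i; move: Bin; rewrite !ksubE => /eqP -> /eqP ->.
  by rewrite subnK // eqxx andbT.
rewrite big_pred0 // => i; have := enum_valP i; move: Bin; rewrite !ksubE => cB /eqP cA.
apply/negP => /andP[_ /eqP e]; case/negP: cB; apply/eqP; lia.
Qed.

Lemma bridge : #|[set u : 'rV['F_2]_N | u *m M == 0]| = #|Kset [set: 'I_n] K|.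
Proof.
rewrite -(card_imset _ phi_inj); apply: eq_card => c.
apply/imsetP/idP => [[u] |].
  by rewrite !inE -phi_ker => uk ->; rewrite phi_supp.
rewrite inE => /andP[sc Dc].
have pc : phi (\row_i c (enum_val i)) = c.
  apply/ffunP => A; rewrite ffunE.
  case: (boolP (A \in ksub n K)) => Ain.
    rewrite (big_pred1 (enum_rank_in Ain A)); last first.
      move=> i; apply/eqP/eqP => [e|->]; last by rewrite (enum_rankK_in Ain Ain).
      by rewrite -[LHS](enum_valK_in Ain) e.
    by rewrite mxE (enum_rankK_in Ain Ain).
  rewrite big_pred0; last first.
    by move=> i; apply/negP => /eqP e; case/negP: Ain; rewrite -e enum_valP.
  apply/esym/eqP; apply: contraR Ain => /(suppP _ _ _ sc) /andP[_ cA].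
  by rewrite ksubE.
exists (\row_i c (enum_val i)) => //.
by rewrite inE -phi_ker pc.
Qed.
End Bridge.

End A4.
Export A4.
Module A5.
Local Open Scope ring_scope.

Lemma card_ker m n (A : 'M['F_2]_(m, n)) : #|[set u : 'rV_m | u *m A == 0]| = (2 ^ \rank (kermx A))%N.
Proof.
have c2 : #|'F_2| = 2%N by rewrite card_Fp.
transitivity (#|'F_2| ^ \rank (kermx A))%N; last by rewrite c2.
rewrite -card_rowg; apply: eq_card => u.
by rewrite !inE sub_kermx.
Qed.


End A5.
Export A5.
End Aux.
Import Aux.

Import GRing.Theory.
Theorem mainTheorem7 (m : nat) (hm : (1 <= m)%N) :
  ((\rank (kermx (bdry (2 * m) m.+1)))%:Z =
   ('C(2 * m, m.-1))%:Z - (\sum_(i < m) 2 ^ (m.-1 - i) * 'C(2 * i, i))%N%:Z)%R.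
Proof.
case: m hm => [//|p] _.
have r : \rank (kermx (bdry (2 * p.+1) p.+2)) = kap p.+1.
  apply/eqP; rewrite -(@eqn_exp2l 2) // -card_ker bridge (Kcard (j := p.+1)) //.
  by rewrite cardsT card_ord.
rewrite r -(kapS p) PoszD.
have -> : (\sum_(i < p.+1) 2 ^ (p.+1.-1 - i) * 'C(2 * i, i))%N = Ssum p.+1 by [].
by rewrite addrK.
Qed.
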